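(* Let $m>2$ and $n>0$ be odd integers. Then $\mathcal{C}_m^n=\mathbf{Z}_m^n$.
   Context: $\mathbf{Z}_m$ denotes the integers modulo $m$. $T:\mathbf{Z}_m^n\to\mathbf{Z}_m^n$ is $T(a_0,\dots,a_{n-1})=(a_0+a_1,a_1+a_2,\dots,a_{n-1}+a_0)$. $\mathcal{C}_m^n$ is the set of tuples lying in a cycle of some sequence $(T^k\mathbf{b})_{k\ge0}$, i.e. the set of $\mathbf{a}\in\mathbf{Z}_m^n$ such that $T^P\mathbf{a}=\mathbf{a}$ for some positive integer $P$. *)

(* Defs.v *)
From mathcomp Require Import all_boot all_order all_algebra.
Set Implicit Arguments. Unset Strict Implicit. Unset Printing Implicit Defensive.
Import GRing.Theory.
Local Open Scope ring_scope.

(* Tuples in Z_m^n are finite functions 'I_n -> 'Z_m (used only with 1 < m). *)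
Definition ducci (m n : nat) (a : {ffun 'I_n -> 'Z_m}) : {ffun 'I_n -> 'Z_m} :=
  [ffun i => a i + a (ordS i)].

Definition in_cycle (m n : nat) (a : {ffun 'I_n -> 'Z_m}) : Prop :=
  exists P : nat, (0 < P)%N /\ iter P (@ducci m n) a = a.

(* Main.v *)
Require Import Defs.
From mathcomp Require Import all_boot all_order all_algebra.
From mathcomp Require Import zify.
Import GRing.Theory.

Lemma double0 (m' : nat) (hm : odd m'.+2) (x : 'Z_m'.+2) : (x + x = 0)%R -> x = 0%R.
Proof.
move/(congr1 val) => /= H; apply: val_inj => /=.
have hx := ltn_ord x.
move: H hm hx; rewrite /= -/(nat_of_ord x).
case: x => [x hx0] /= H hm hx.
have [k hk] : exists k, m'.+2 = k.*2.+1.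
  have ho : odd m'.+2 = true by exact: hm.
  exists (m'.+2)./2; have := odd_double_half m'.+2; rewrite ho /= => <-; by [].
move: H; rewrite hk => H; move: hx; rewrite hk => hx.
rewrite -!muln2 in H hx hk. have /dvdnP [q hq] : (k*2).+1 %| x + x by apply/eqP.
case: q hq => [|[|q]] hq; [lia|lia|nia].
Qed.

Lemma alt (n' m' : nat) (hm : odd m'.+2) (hn : odd n'.+1) (d : 'I_n'.+1 -> 'Z_m'.+2)
  (hd : forall i, (d i + d (ordS i) = 0)%R) : forall i, d i = 0%R.
Proof.
have step : forall k, (k < n'.+1)%N -> d (inord k) = ((-1) ^+ k * d ord0)%R.
  elim=> [|k IH] hk.
    by rewrite expr0 mul1r; congr d; apply: val_inj; rewrite /= inordK.
  have e : ordS (inord k) = inord k.+1 :> 'I_n'.+1.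
    by apply: val_inj; rewrite /= !inordK ?modn_small // ltnW.
  rewrite -e; have := hd (inord k); rewrite IH ?(ltnW hk) // => h.
  by rewrite exprS mulN1r mulNr; apply/eqP; rewrite -addr_eq0 addrC h.
have e : ordS (inord n') = ord0 :> 'I_n'.+1.
  by apply: val_inj; rewrite /= inordK ?modnn.
have h := hd (inord n'); rewrite e step // -signr_odd in h.
have hn' : odd n' = false by move: hn => /=; case: (odd n').
rewrite hn' expr0 mul1r in h.
have d0 := @double0 _ hm _ h.
by move=> i; rewrite -(inord_val i) step // d0 mulr0.
Qed.

Lemma ducci_inj (m n : nat) (hm : (2 < m)%N) (hmodd : odd m)
  (hnodd : odd n) : injective (@ducci m n).
Proof.
case: m hm hmodd => [|[|[|m']]] // _ hm.
case: n hnodd => [|n'] // hn a b hab.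
apply/ffunP => i; apply/eqP; rewrite -subr_eq0; apply/eqP; move: i.
apply: (@alt _ _ hm hn) => i.
move/ffunP: hab => /(_ i); rewrite /ducci !ffunE => h.
apply/eqP; rewrite addrACA -opprD h; rewrite subrr //.
Qed.

Theorem proposition6p1 (m n : nat) (hm : (2 < m)%N) (hmodd : odd m)
  (hn : (0 < n)%N) (hnodd : odd n) :
  forall a : {ffun 'I_n -> 'Z_m}, in_cycle a.
Proof.
move=> a; have inj := @ducci_inj _ _ hm hmodd hnodd.
exists (order (@ducci m n) a); split; first exact: order_gt0.
exact: iter_order.
Qed.
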